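(* Let $Q$ be a quantity space over a field $K$. Then $Q/{\sim}$, with multiplication $[x][y]=[xy]$ and identity $[1_Q]$, is an abelian group.
   Context: A scalable monoid over a (unital, associative) ring $R$ is a monoid $X$ (identity $1_X$, product written $xy$) together with a map $R\times X\to X$, $(\alpha,x)\mapsto\alpha\cdot x$, such that $1\cdot x=x$, $\alpha\cdot(\beta\cdot x)=\alpha\beta\cdot x$ and $\alpha\cdot(xy)=(\alpha\cdot x)y=x(\alpha\cdot y)$ for all $\alpha,\beta\in R$, $x,y\in X$. A quantity space over a field $K$ is a commutative scalable monoid $Q$ over $K$ for which there exists a finite set $\{e_1,\ldots,e_n\}$ of invertible elements of $Q$ (a basis) such that every $x\in Q$ has a unique expansion $x=\mu\cdot\prod_{i=1}^n e_i^{k_i}$ with $\mu\in K$ and $k_1,\ldots,k_n\in\mathbb{Z}$. On $Q$, $x\sim y$ means $\alpha\cdot x=\beta\cdot y$ for some $\alpha,\beta\in K$; this is an equivalence relation compatible with multiplication, $[x]$ denotes the class of $x$, and $Q/{\sim}$ is the set of classes. *)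

(* Defs.v *)
From HB Require Import structures.
From mathcomp Require Import all_boot all_order all_algebra.
From Stdlib Require Import ClassicalEpsilon.
Set Implicit Arguments. Unset Strict Implicit. Unset Printing Implicit Defensive.
Import GRing.Theory.
Local Open Scope ring_scope.

Record scalable_monoid (R : nzRingType) := ScalableMonoid {
  sm_car :> Type;
  sm_mul : sm_car -> sm_car -> sm_car;
  sm_one : sm_car;
  sm_scale : R -> sm_car -> sm_car;
  sm_mulA : forall x y z, sm_mul x (sm_mul y z) = sm_mul (sm_mul x y) z;
  sm_mul1x : forall x, sm_mul sm_one x = x;
  sm_mulx1 : forall x, sm_mul x sm_one = x;
  sm_scale1 : forall x, sm_scale 1 x = x;
  sm_scaleA : forall (a b : R) x, sm_scale a (sm_scale b x) = sm_scale (a * b) x;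
  sm_scale_mull : forall (a : R) x y, sm_scale a (sm_mul x y) = sm_mul (sm_scale a x) y;
  sm_scale_mulr : forall (a : R) x y, sm_scale a (sm_mul x y) = sm_mul x (sm_scale a y)
}.

Section QS.
Variable K : fieldType.
Variable Q : scalable_monoid K.

Local Notation mul := (@sm_mul K Q).
Local Notation one := (@sm_one K Q).
Local Notation scale := (@sm_scale K Q).

Definition zpow (a ainv : Q) (z : int) : Q :=
  match z with
  | Posz m => iter m (mul a) one
  | Negz m => iter m.+1 (mul ainv) one
  end.

Definition prodpow n (e einv : 'I_n -> Q) (k : {ffun 'I_n -> int}) : Q :=
  foldr (fun i acc => mul (zpow (e i) (einv i) (k i)) acc) one (enum 'I_n).

Definition is_quantity_space : Prop :=
  (forall x y : Q, mul x y = mul y x) /\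
  exists (n : nat) (e einv : 'I_n -> Q),
    (forall i, mul (e i) (einv i) = one /\ mul (einv i) (e i) = one) /\
    forall x : Q, exists! p : K * {ffun 'I_n -> int},
      x = scale p.1 (prodpow e einv p.2).

Definition qsim (x y : Q) : Prop := exists a b : K, scale a x = scale b y.

Definition qclass_of (x : Q) : Q -> Prop := fun y => qsim x y.

Definition qclass : Type := {A : Q -> Prop | exists x, A = qclass_of x}.

Definition qcls (x : Q) : qclass := exist _ (qclass_of x) (ex_intro _ x erefl).

Definition qrep (A : qclass) : Q :=
  proj1_sig (constructive_indefinite_description _ (proj2_sig A)).

Definition qmul (A B : qclass) : qclass := qcls (mul (qrep A) (qrep B)).

Definition qone : qclass := qcls one.

End QS.

(* Main.v *)
Require Import Defs.
From mathcomp Require Import all_boot all_order all_algebra.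
From Stdlib Require Import ClassicalEpsilon FunctionalExtensionality PropExtensionality ProofIrrelevance.
Import GRing.Theory.
Local Open Scope ring_scope.

Section Proof.
Variable K : fieldType.
Variable Q : scalable_monoid K.
Hypothesis HQ : is_quantity_space Q.
Implicit Types x y z w : Q.

Local Notation mul := (@sm_mul K Q).
Local Notation one := (@sm_one K Q).
Local Notation scale := (@sm_scale K Q).

Definition invb (x : Q) := exists w, mul w x = one.

Lemma comm : forall x y : Q, mul x y = mul y x.
Proof. by case: HQ. Qed.

Lemma invb_mul x y : invb x -> invb y -> invb (mul x y).
Proof.
move=> [w1 H1] [w2 H2]; exists (mul w1 w2).
rewrite -sm_mulA (comm x y) (sm_mulA w2) H2 sm_mul1x //.
Qed.

Lemma invb_one : invb one.
Proof. by exists one; rewrite sm_mul1x. Qed.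

Lemma invb_iter m (a : Q) : invb a -> invb (iter m (mul a) one).
Proof.
move=> Ha; elim: m => [|m IH] /=; first exact: invb_one.
exact: invb_mul.
Qed.

Lemma qsim_refl x : qsim x x.
Proof. by exists 1, 1. Qed.

Lemma qsim_sym x y : qsim x y -> qsim y x.
Proof. by move=> [a [b H]]; exists b, a. Qed.

Lemma qsim_trans x y z : qsim x y -> qsim y z -> qsim x z.
Proof.
case: HQ => _ [n [e [einv [_ Hu]]]].
move=> [a [b H1]] [c [d H2]].
have [[mx kx] [Ex _]] := Hu x.
have [[my ky] [Ey _]] := Hu y.
have [[mz kz] [Ez _]] := Hu z.
simpl in *.
have [p [_ Up]] := Hu (scale a x).
have E1 : (a * mx, kx) = (b * my, ky).
  rewrite -(Up (a * mx, kx)) /=; last by rewrite Ex sm_scaleA.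
  rewrite -(Up (b * my, ky)) //=. by rewrite H1 Ey sm_scaleA.
have [q [_ Uq]] := Hu (scale c y).
have E2 : (c * my, ky) = (d * mz, kz).
  rewrite -(Uq (c * my, ky)) /=; last by rewrite Ey sm_scaleA.
  rewrite -(Uq (d * mz, kz)) //=. by rewrite H2 Ez sm_scaleA.
case: E1 => _ Ek1; case: E2 => _ Ek2.
exists 0, 0.
by rewrite Ex Ez !sm_scaleA !mul0r Ek1 Ek2.
Qed.

Arguments qsim_sym {x y}.
Arguments qsim_trans {x y z}.

Lemma qsim_mul x y (x' y' : Q) : qsim x x' -> qsim y y' -> qsim (mul x y) (mul x' y').
Proof.
move=> [a [b H1]] [c [d H2]].
exists (a * c), (b * d).
have E u v (p q : K) : scale (p * q) (mul u v) = mul (scale p u) (scale q v).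
  by rewrite -sm_scaleA sm_scale_mulr sm_scale_mull.
by rewrite !E H1 H2.
Qed.

Lemma qclass_eq (A B : qclass Q) : proj1_sig A = proj1_sig B -> A = B.
Proof.
case: A => P h; case: B => P' h' /= E; subst P'.
by rewrite (proof_irrelevance _ h h').
Qed.

Lemma qcls_eq x y : qsim x y -> qcls x = qcls y.
Proof.
move=> H; apply: qclass_eq => /=.
apply: functional_extensionality => z; apply: propositional_extensionality.
rewrite /qclass_of; split=> Hz.
  exact: qsim_trans (qsim_sym H) Hz.
exact: qsim_trans H Hz.
Qed.

Lemma qcls_rep (A : qclass Q) : qcls (qrep A) = A.
Proof.
apply: qclass_eq => /=.
rewrite /qrep; case: (constructive_indefinite_description _ _) => x /= ->.
by case: A.
Qed.

Lemma rep_qcls x : qsim (qrep (qcls x)) x.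
Proof.
rewrite /qrep; case: (constructive_indefinite_description _ _) => y /= E.
have : qclass_of x x by exact: qsim_refl.
by rewrite E.
Qed.

Lemma qmulE x y : qmul (qcls x) (qcls y) = qcls (mul x y).
Proof. by apply: qcls_eq; apply: qsim_mul; apply: rep_qcls. Qed.

Lemma all_invb_sim x : exists w, qsim (mul w x) one.
Proof.
case: HQ => _ [n [e [einv [Hi Hu]]]].
have [[m k] [Ex _]] := Hu x; simpl in Ex.
have : invb (prodpow e einv k).
  rewrite /prodpow; elim: (enum 'I_n) => [|i s IH] /=; first exact: invb_one.
  apply: invb_mul => //.
  case: (k i) => [mm|mm] /=.
    apply: invb_iter; exists (einv i); exact: (Hi i).2.
  apply: (invb_iter mm.+1); exists (e i); exact: (Hi i).1.
move=> [w Hw]; exists w.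
exists 1, m.
by rewrite sm_scale1 Ex -sm_scale_mulr Hw.
Qed.

End Proof.

Theorem proposition3p18 (K : fieldType) (Q : scalable_monoid K)
  (HQ : is_quantity_space Q) :
  (* the multiplication on Q/~ satisfies [x][y] = [xy] (well-definedness) *)
  (forall x y : Q, qmul (qcls x) (qcls y) = qcls (sm_mul x y)) /\
  (* and (Q/~, qmul, [1_Q]) is an abelian group *)
  (forall A B C : qclass Q, qmul A (qmul B C) = qmul (qmul A B) C) /\
  (forall A B : qclass Q, qmul A B = qmul B A) /\
  (forall A : qclass Q, qmul (qone Q) A = A) /\
  (forall A : qclass Q, exists B : qclass Q, qmul B A = qone Q).
Proof.
have ME := (@qmulE K Q HQ).
split; first exact: ME.
split.
  move=> A B C; rewrite -(@qcls_rep K Q A) -(@qcls_rep K Q B) -(@qcls_rep K Q C).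
  by rewrite !ME sm_mulA.
split.
  move=> A B; rewrite -(@qcls_rep K Q A) -(@qcls_rep K Q B) !ME.
  by rewrite (@comm K Q HQ).
split.
  by move=> A; rewrite -(@qcls_rep K Q A) /qone ME sm_mul1x.
move=> A; rewrite -(@qcls_rep K Q A).
have [w Hw] := (@all_invb_sim K Q HQ) (qrep A).
exists (qcls w); rewrite ME /qone; exact: (@qcls_eq K Q HQ) _ _ Hw.
Qed.
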